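(* Let $\mathbb V$ be the 2-vector space of a 2-term complex $V_1\xrightarrow{\mathrm d}V_0$ and $L$ a Dirac structure of the omni-Lie 2-algebra $\mathfrak{gl}(\mathbb V)\oplus\mathbb V$. Then the normalizer $N_L$ is a sub-Lie 2-algebra of $\mathfrak{gl}(\mathbb V)$, i.e. it is a 2-sub-vector space (in particular $\delta(N_L\cap\mathrm{End}^1(\mathbb V))\subset N_L$) closed under the bracket of $\mathfrak{gl}(\mathbb V)$.
   Context: All vector spaces are finite-dimensional over $\mathbb R$. A 2-sub-vector space has subspaces of objects and morphisms with restricted structure maps; a sub-Lie 2-algebra is a 2-sub-vector space closed under the bracket. For a 2-term complex $V_1\xrightarrow{\mathrm d}V_0$, $\mathbb V$ has objects $V_0$, morphisms $V_0\oplus V_1$ ($u+m$), $s(u+m)=u$, $t(u+m)=u+\mathrm dm$. Let $\mathrm{End}^0_{\mathrm d}(\mathbb V)=\{A=(A_0,A_1):A_0\mathrm d=\mathrm dA_1\}$, $\mathrm{End}^1(\mathbb V)=\mathrm{Hom}(V_0,V_1)$, $\delta\phi=(\mathrm d\phi,\phi\mathrm d)$; brackets $[A,B]$ componentwise commutator, $[A,\phi]=-[\phi,A]=A_1\phi-\phi A_0$, $[\phi,\psi]_\delta=\phi\mathrm d\psi-\psi\mathrm d\phi$. The strict Lie 2-algebra $\mathfrak{gl}(\mathbb V)$ has objects $\mathrm{End}^0_{\mathrm d}(\mathbb V)$, morphisms $A+\phi$ ($\phi\in\mathrm{End}^1(\mathbb V)$ identified with the morphism $0+\phi$), $s(A+\phi)=A$,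 $t(A+\phi)=A+\delta\phi$, bracket $[A+\phi,B+\psi]=[A,B]+[\phi,\psi]_\delta+[A,\psi]+[\phi,B]$, and acts on $\mathbb V$ by $A(u)=A_0u$, $(A+\phi)(u+m)=A_0u+(A_1m+\phi(u+\mathrm dm))$. The omni-Lie 2-algebra is $\mathfrak{gl}(\mathbb V)\oplus\mathbb V$ with pairing $\langle A+\phi+u+m,B+\psi+v+n\rangle=\tfrac12((A+\phi)(v+n)+(B+\psi)(u+m))$ and bracket $[\![A+\phi+u+m,B+\psi+v+n]\!]=[A+\phi,B+\psi]+\tfrac12((A+\phi)(v+n)-(B+\psi)(u+m))$ (similar formulas on objects), and $\{e_1,e_2\}=[\![e_1,e_2]\!]+\langle e_1,e_2\rangle$, i.e. $\{A+\phi+u+m,B+\psi+v+n\}=[A+\phi,B+\psi]+(A+\phi)(v+n)$. $L^\perp=\{e:\langle e,l\rangle=0\ \forall l\in L\}$; a Dirac structure is a 2-sub-vector space $L=L^\perp$ closed under $[\![\cdot,\cdot]\!]$. The normalizer of $K\subset\mathfrak{gl}(\mathbb V)\oplus\mathbb V$ is $N_K=\{N\in\mathfrak{gl}(\mathbb V):\{N,k\}\in K\ \forall k\in K\}$ (levelwise). *)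

(* Defs.v *)
(* Vector spaces are column-vector spaces 'cV[R]_n over a
   real field R (statement holds for every realFieldType, in particular R).
   V1 = 'cV_n1, V0 = 'cV_n0, d : 'M_(n0,n1) acting by v |-> d *m v. *)
From mathcomp Require Import all_boot all_order all_algebra.
Set Implicit Arguments. Unset Strict Implicit. Unset Printing Implicit Defensive.
Import GRing.Theory.
Local Open Scope ring_scope.

Section Omni.
Variables (R : realFieldType) (n0 n1 : nat) (d : 'M[R]_(n0, n1)).

(* objects of gl(V): pairs (A0,A1) (constrained by End0 below) *)
Definition glo := ('M[R]_n0 * 'M[R]_n1)%type.
(* morphisms of gl(V): A + phi, phi in Hom(V0,V1) = 'M_(n1,n0) *)
Definition glm := (glo * 'M[R]_(n1, n0))%type.
Definition Vo := 'cV[R]_n0.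
Definition Vm := ('cV[R]_n0 * 'cV[R]_n1)%type.
Definition omo := (glo * Vo)%type.
Definition omm := (glm * Vm)%type.

Definition End0 (A : glo) : Prop := A.1 *m d = d *m A.2.

Definition delta (phi : 'M[R]_(n1, n0)) : glo := (d *m phi, phi *m d).

Definition gl_s (X : glm) : glo := X.1.
Definition gl_t (X : glm) : glo := X.1 + delta X.2.
Definition gl_id (A : glo) : glm := (A, 0).

Definition br_o (A B : glo) : glo :=
  (A.1 *m B.1 - B.1 *m A.1, A.2 *m B.2 - B.2 *m A.2).
Definition br_Aphi (A : glo) (phi : 'M[R]_(n1, n0)) : 'M[R]_(n1, n0) :=
  A.2 *m phi - phi *m A.1.
Definition br_delta (phi psi : 'M[R]_(n1, n0)) : 'M[R]_(n1, n0) :=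
  phi *m d *m psi - psi *m d *m phi.
(* [A+phi, B+psi] = [A,B] + [phi,psi]_delta + [A,psi] + [phi,B] *)
Definition br_m (X Y : glm) : glm :=
  (br_o X.1 Y.1, br_delta X.2 Y.2 + br_Aphi X.1 Y.2 - br_Aphi Y.1 X.2).

Definition act_o (A : glo) (u : Vo) : Vo := A.1 *m u.
Definition act_m (X : glm) (w : Vm) : Vm :=
  (X.1.1 *m w.1, X.1.2 *m w.2 + X.2 *m (w.1 + d *m w.2)).

Definition V_t (w : Vm) : Vo := w.1 + d *m w.2.
Definition om_s (e : omm) : omo := (gl_s e.1, e.2.1).
Definition om_t (e : omm) : omo := (gl_t e.1, V_t e.2).
Definition om_id (e : omo) : omm := (gl_id e.1, (e.2, 0)).

Definition half : R := (2%:R)^-1.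

Definition pair_o (e f : omo) : Vo := half *: (act_o e.1 f.2 + act_o f.1 e.2).
Definition pair_m (e f : omm) : Vm := half *: (act_m e.1 f.2 + act_m f.1 e.2).

Definition cbr_o (e f : omo) : omo :=
  (br_o e.1 f.1, half *: (act_o e.1 f.2 - act_o f.1 e.2)).
Definition cbr_m (e f : omm) : omm :=
  (br_m e.1 f.1, half *: (act_m e.1 f.2 - act_m f.1 e.2)).

Definition curly_o (N : glo) (k : omo) : omo := (br_o N k.1, act_o N k.2).
Definition curly_m (N : glm) (k : omm) : omm := (br_m N k.1, act_m N k.2).

Definition subspace (T : lmodType R) (S : T -> Prop) : Prop :=
  S 0 /\ forall (a : R) (x y : T), S x -> S y -> S (a *: x + y).

Definition om_2sub (K0 : omo -> Prop) (K1 : omm -> Prop) : Prop :=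
  [/\ subspace K0 /\ subspace K1,
      (forall e, K0 e -> End0 e.1) /\ (forall e, K1 e -> End0 e.1.1),
      (forall e, K1 e -> K0 (om_s e) /\ K0 (om_t e))
    & (forall e, K0 e -> K1 (om_id e))].

(* Dirac structure: L = L^perp levelwise, closed under [[ , ]] *)
Definition Dirac (L0 : omo -> Prop) (L1 : omm -> Prop) : Prop :=
  [/\ om_2sub L0 L1,
      (forall e, L0 e <-> (End0 e.1 /\ forall l, L0 l -> pair_o e l = 0)),
      (forall e, L1 e <-> (End0 e.1.1 /\ forall l, L1 l -> pair_m e l = 0)),
      (forall e f, L0 e -> L0 f -> L0 (cbr_o e f))
    & (forall e f, L1 e -> L1 f -> L1 (cbr_m e f))].

Definition Norm0 (K0 : omo -> Prop) (N : glo) : Prop :=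
  End0 N /\ forall k, K0 k -> K0 (curly_o N k).
Definition Norm1 (K1 : omm -> Prop) (N : glm) : Prop :=
  End0 N.1 /\ forall k, K1 k -> K1 (curly_m N k).

Definition gl_sub_Lie2 (N0 : glo -> Prop) (N1 : glm -> Prop) : Prop :=
  [/\ subspace N0 /\ subspace N1,
      (forall A, N0 A -> End0 A) /\ (forall X, N1 X -> End0 X.1),
      (forall X, N1 X -> N0 (gl_s X) /\ N0 (gl_t X)),
      (forall A, N0 A -> N1 (gl_id A))
    & (forall A B, N0 A -> N0 B -> N0 (br_o A B)) /\
      (forall X Y, N1 X -> N1 Y -> N1 (br_m X Y))].

End Omni.

(* Main.v *)
Require Import Defs.
From mathcomp Require Import all_boot all_order all_algebra.
Import GRing.Theory Num.Theory.
Local Open Scope ring_scope.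

Inductive zt := ZV of nat | ZN of zt | ZA of zt & zt | Z0.

Fixpoint zeval (V : zmodType) (e : seq V) (t : zt) {struct t} : V :=
  match t with
  | ZV i => nth 0 e i
  | ZN a => - zeval V e a
  | ZA a b => zeval V e a + zeval V e b
  | Z0 => 0
  end.
Arguments zeval {V} e t.

Fixpoint zcoef (t : zt) (i : nat) : int :=
  match t with
  | ZV j => (i == j)%:Z
  | ZN a => - zcoef a i
  | ZA a b => zcoef a i + zcoef b i
  | Z0 => 0
  end.

Lemma zevalE (V : zmodType) (e : seq V) t :
  zeval e t = \sum_(i < size e) (nth 0 e i) *~ zcoef t i.
Proof.
elim: t => [j|a IH|a IHa b IHb|] /=.
- case: (ltnP j (size e)) => hj.
  + rewrite (bigD1 (Ordinal hj)) //= eqxx mulr1z big1 ?addr0 // => i /negbTE.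
    by rewrite -val_eqE /= => ->; rewrite mulr0z.
  + rewrite nth_default // big1 // => i _.
    by rewrite (_ : (i == j :> nat) = false) ?mulr0z //; apply/negbTE; rewrite neq_ltn (leq_trans (ltn_ord i) hj).
- by rewrite IH -sumrN; apply: eq_bigr => i _; rewrite mulrNz.
- by rewrite IHa IHb -big_split; apply: eq_bigr => i _; rewrite mulrzDr.
- by rewrite big1 // => i _; rewrite mulr0z.
Qed.

Lemma zsound (V : zmodType) (e : seq V) a b :
  all (fun i => zcoef a i == zcoef b i) (iota 0 (size e)) -> zeval e a = zeval e b.
Proof.
move/allP=> H; rewrite !zevalE; apply: eq_bigr => i _.
by rewrite (eqP (H i _)) // mem_iota /= add0n.
Qed.

Ltac teq x y :=
  lazymatch x with
  | @mulmx _ ?m ?n ?p ?a ?b =>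
      lazymatch y with
      | @mulmx _ m n p ?a' ?b' =>
          let r := teq a a' in
          lazymatch r with true => teq b b' | false => constr:(false) end
      | _ => constr:(false)
      end
  | @GRing.scale _ _ ?s ?v =>
      lazymatch y with
      | @GRing.scale _ _ ?s' ?v' =>
          let r := teq s s' in
          lazymatch r with true => teq v v' | false => constr:(false) end
      | _ => constr:(false)
      end
  | _ => match y with x => constr:(true) | _ => constr:(false) end
  end.

Ltac zmember x l :=
  lazymatch l with
  | ?y :: ?l' =>
      let r := teq x y in
      lazymatch r with
      | true => constr:(0%N)
      | false => let n := zmember x l' in constr:(S n)
      end
  end.

Ltac zmem x l :=
  lazymatch l with
  | nil => constr:(false)
  | ?y :: ?l' =>
      let r := teq x y in
      lazymatch r with
      | true => constr:(true)
      | false => zmem x l'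
      end
  end.

Ltac zcollect t l :=
  lazymatch t with
  | ?a + ?b => let l1 := zcollect a l in zcollect b l1
  | - ?a => zcollect a l
  | 0 => l
  | _ => let r := zmem t l in
         lazymatch r with true => l | false => constr:(t :: l) end
  end.

Ltac zreify t l :=
  lazymatch t with
  | ?a + ?b => let x := zreify a l in let y := zreify b l in constr:(ZA x y)
  | - ?a => let x := zreify a l in constr:(ZN x)
  | 0 => constr:(Z0)
  | _ => let n := zmember t l in constr:(ZV n)
  end.

Ltac zabel :=
  lazymatch goal with |- ?a = ?b =>
   let T := type of a in
   let l0 := constr:(@nil T) in
   let l1 := zcollect a l0 in let l := zcollect b l1 in
   let ra := zreify a l in let rb := zreify b l in
   change (zeval l ra = zeval l rb); apply: zsound; vm_compute; reflexivity
  end.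

Ltac mnorm := repeat progress rewrite ?mulmxDl ?mulmxDr ?mulmxBl ?mulmxBr ?mulNmx ?mulmxN ?mulmxA ?opprD ?opprK ?opprB ?mulmx0 ?mul0mx ?scalerDr ?scalerBr ?scalerN ?addr0 ?add0r ?oppr0.

Lemma pairE (A B : Type) (x y : A * B) : x.1 = y.1 -> x.2 = y.2 -> x = y.
Proof. by case: x y => ? ? [? ?] /= -> ->. Qed.

Section S.
Variables (R : realFieldType) (n0 n1 : nat) (d : 'M[R]_(n0, n1)).

Ltac lnorm := repeat progress rewrite ?mulmxDl ?mulmxDr ?mulmxBl ?mulmxBr ?mulNmx ?mulmxN ?mulmxA ?opprD ?opprK ?opprB ?mulmx0 ?mul0mx ?scalerDr ?scalerBr ?scalerN ?addr0 ?add0r ?oppr0 -?scalemxAl -?scalemxAr ?scalerA.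

Lemma half_neq0 : Defs.half R != 0.
Proof. by rewrite /Defs.half invr_eq0 pnatr_eq0. Qed.

Lemma half0 (V : lmodType R) (w : V) : Defs.half R *: w = 0 -> w = 0.
Proof. by move=> h; rewrite -[w](scalerK half_neq0) h scaler0. Qed.

Lemma curly_m_br (X Y : glm R n0 n1) (k : omm R n0 n1) :
  End0 d X.1 -> End0 d Y.1 -> End0 d k.1.1 ->
  curly_m d (br_m d X Y) k = curly_m d X (curly_m d Y k) - curly_m d Y (curly_m d X k).
Proof.
case: X => [[X0 X1] f]; case: Y => [[Y0 Y1] g]; case: k => [[[K0 K1] h] [u m]].
rewrite /End0 /= => eX eY eK.
have eXl : forall p (P : 'M[R]_(p, n0)), P *m X0 *m d = P *m d *m X1 by move=> p P; rewrite -mulmxA eX mulmxA.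
have eYl : forall p (P : 'M[R]_(p, n0)), P *m Y0 *m d = P *m d *m Y1 by move=> p P; rewrite -mulmxA eY mulmxA.
have eKl : forall p (P : 'M[R]_(p, n0)), P *m K0 *m d = P *m d *m K1 by move=> p P; rewrite -mulmxA eK mulmxA.
rewrite /curly_m /br_m /br_o /br_delta /br_Aphi /act_m /=.
apply: pairE => /=; [apply: pairE => /=; [apply: pairE => /= |] | apply: pairE => /=].
all: mnorm; rewrite ?eX ?eY ?eK ?eXl ?eYl ?eKl; mnorm.
all: zabel.
Qed.

Lemma curly_o_br (A B : glo R n0 n1) (k : omo R n0 n1) :
  curly_o (br_o A B) k = curly_o A (curly_o B k) - curly_o B (curly_o A k).
Proof.
case: A => [A0 A1]; case: B => [B0 B1]; case: k => [[K0 K1] u].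
rewrite /curly_o /br_o /act_o /=.
apply: pairE => /=; [apply: pairE => /= |]; mnorm; zabel.
Qed.

Lemma curly_o_lin a (N M : glo R n0 n1) (k : omo R n0 n1) :
  curly_o (a *: N + M) k = a *: curly_o N k + curly_o M k.
Proof.
case: N => [N0 N1]; case: M => [M0 M1]; case: k => [[K0 K1] u].
rewrite /curly_o /br_o /act_o /=.
apply: pairE => /=; [apply: pairE => /= |]; lnorm; zabel.
Qed.

Lemma curly_m_lin a (N M : glm R n0 n1) (k : omm R n0 n1) :
  curly_m d (a *: N + M) k = a *: curly_m d N k + curly_m d M k.
Proof.
case: N => [[N0 N1] f]; case: M => [[M0 M1] g]; case: k => [[[K0 K1] h] [u m]].
rewrite /curly_m /br_m /br_o /br_delta /br_Aphi /act_m /=.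
apply: pairE => /=; [apply: pairE => /=; [apply: pairE => /= |] | apply: pairE => /=].
all: lnorm; zabel.
Qed.

Lemma curly_o0 (k : omo R n0 n1) : curly_o 0 k = 0.
Proof.
case: k => [[K0 K1] u]; rewrite /curly_o /br_o /act_o /=.
by apply: pairE => /=; [apply: pairE => /= |]; mnorm.
Qed.

Lemma curly_m0 (k : omm R n0 n1) : curly_m d 0 k = 0.
Proof.
case: k => [[[K0 K1] h] [u m]].
rewrite /curly_m /br_m /br_o /br_delta /br_Aphi /act_m /=.
by apply: pairE => /=; [apply: pairE => /=; [apply: pairE => /= |] | apply: pairE => /=]; mnorm.
Qed.

Lemma End0_lin a (A B : glo R n0 n1) : End0 d A -> End0 d B -> End0 d (a *: A + B).
Proof.
case: A => [A0 A1]; case: B => [B0 B1]; rewrite /End0 /= => eA eB.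
by rewrite mulmxDl mulmxDr -scalemxAl -scalemxAr eA eB.
Qed.

Lemma End0_0 : End0 d (0 : glo R n0 n1).
Proof. by rewrite /End0 /= mul0mx mulmx0. Qed.

Lemma End0_br (A B : glo R n0 n1) : End0 d A -> End0 d B -> End0 d (br_o A B).
Proof.
case: A => [A0 A1]; case: B => [B0 B1]; rewrite /End0 /= => eA eB.
by rewrite mulmxBl mulmxBr -!mulmxA eA eB !mulmxA eA eB.
Qed.

Lemma s_ok (X : glm R n0 n1) (k : omo R n0 n1) :
  om_s (curly_m d X (om_id k)) = curly_o X.1 k.
Proof. by []. Qed.

Lemma t_ok (X : glm R n0 n1) (k : omo R n0 n1) : End0 d k.1 ->
  om_t d (curly_m d X (om_id k)) = curly_o (gl_t d X) k.
Proof.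
case: X => [[X0 X1] f]; case: k => [[K0 K1] u].
rewrite /End0 /= => eK.
have eKl : forall p (P : 'M[R]_(p, n0)), P *m K0 *m d = P *m d *m K1 by move=> p P; rewrite -mulmxA eK mulmxA.
rewrite /om_t /curly_m /curly_o /gl_t /V_t /delta /br_m /br_o /br_delta /br_Aphi /act_m /act_o /=.
apply: pairE => /=; [apply: pairE => /= |].
all: mnorm; rewrite ?eK ?eKl; mnorm; zabel.
Qed.

Lemma id_key (A : glo R n0 n1) (k l : omm R n0 n1) :
  End0 d A ->
  pair_o (curly_o A (om_s k)) (om_s l) = 0 ->
  pair_m d (om_id (curly_o A (om_s k))) l = 0 ->
  pair_m d (om_id (curly_o A (om_t d l))) k = 0 ->
  pair_m d (om_id (om_t d l)) k = 0 ->
  pair_m d (curly_m d (gl_id A) k) l = 0.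
Proof.
case: A => [A0 A1]; case: k => [[[K0 K1] h] [u m]]; case: l => [[[Y0 Y1] g] [v n]].
rewrite /End0 /= => eA.
have eAl : forall p (P : 'M[R]_(p, n0)), P *m A0 *m d = P *m d *m A1 by move=> p P; rewrite -mulmxA eA mulmxA.
rewrite /pair_m /pair_o /curly_m /curly_o /om_id /om_s /om_t /gl_id /gl_s /gl_t /br_m /br_o /br_Aphi /br_delta /act_m /act_o /V_t /delta /=.
move/half0 => h0 /half0/(congr1 snd) /= h1 /half0/(congr1 snd) /= h4 /half0/(congr1 snd) /= h5.
apply/eqP; rewrite scaler_eq0; apply/orP; right; apply/eqP; apply: pairE => /=.
  by rewrite -h0; mnorm; zabel.
match goal with h1 : ?E1 = 0, h4 : ?E4 = 0, h5 : ?E5 = 0 |- ?G = 0 =>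
  transitivity (E1 + A1 *m E5 - E4); [ | by rewrite h1 h4 h5 mulmx0 subr0 addr0]
end.
mnorm; rewrite ?eA ?eAl; mnorm; zabel.
Qed.

Lemma End0_gl_t (X : glm R n0 n1) : End0 d X.1 -> End0 d (gl_t d X).
Proof.
case: X => [[X0 X1] f]; rewrite /End0 /gl_t /delta /= => eX.
by rewrite mulmxDl mulmxDr eX !mulmxA.
Qed.

End S.

Theorem mainTheorem11 (R : realFieldType) (n0 n1 : nat) (d : 'M[R]_(n0, n1))
    (L0 : omo R n0 n1 -> Prop) (L1 : omm R n0 n1 -> Prop) :
  Dirac d L0 L1 ->
  gl_sub_Lie2 d (Norm0 d L0) (Norm1 d L1).
Proof.
case=> [[[sub0 sub1] [E0 E1] st idm] perp0 perp1 cl0 cl1].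
have L0lin : forall a x y, L0 x -> L0 y -> L0 (a *: x + y) := sub0.2.
have L1lin : forall a x y, L1 x -> L1 y -> L1 (a *: x + y) := sub1.2.
have L0sub : forall x y, L0 x -> L0 y -> L0 (x - y).
  by move=> x y hx hy; have := L0lin (-1) y x hy hx; rewrite scaleN1r addrC.
have L1sub : forall x y, L1 x -> L1 y -> L1 (x - y).
  by move=> x y hx hy; have := L1lin (-1) y x hy hx; rewrite scaleN1r addrC.
split.
- split.
  + split.
    * split; first exact: End0_0.
      by move=> k _; rewrite curly_o0; exact: sub0.1.
    * move=> a x y [ex hx] [ey hy]; split; first exact: End0_lin.
      by move=> k hk; rewrite curly_o_lin; apply: L0lin; [apply: hx | apply: hy].
  + split.
    * split; first exact: End0_0.
      by move=> k _; rewrite curly_m0; exact: sub1.1.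
    * move=> a x y [ex hx] [ey hy]; split; first by have := @End0_lin _ _ _ d a _ _ ex ey.
      by move=> k hk; rewrite curly_m_lin; apply: L1lin; [apply: hx | apply: hy].
- by split => ? [].
- move=> X [eX hX]; split.
  + split; first exact eX.
    by move=> k hk; rewrite -(@s_ok _ _ _ d); exact: (st _ (hX _ (idm _ hk))).1.
  + split; first exact: End0_gl_t.
    move=> k hk; rewrite -(@t_ok _ _ _ d); last exact: E0 _ hk.
    exact: (st _ (hX _ (idm _ hk))).2.
- move=> A [eA hA]; split; first exact eA.
  move=> k hk; apply/perp1; split; first exact: End0_br eA (E1 _ hk).
  move=> l hl; apply: id_key => //.
  + exact: ((perp0 _).1 (hA _ (st _ hk).1)).2 _ (st _ hl).1.
  + exact: ((perp1 _).1 (idm _ (hA _ (st _ hk).1))).2 _ hl.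
  + exact: ((perp1 _).1 (idm _ (hA _ (st _ hl).2))).2 _ hk.
  + exact: ((perp1 _).1 (idm _ (st _ hl).2)).2 _ hk.
- split.
  + move=> A B [eA hA] [eB hB]; split; first exact: End0_br.
    by move=> k hk; rewrite curly_o_br; apply: L0sub; [apply: hA; apply: hB | apply: hB; apply: hA].
  + move=> X Y [eX hX] [eY hY]; split; first exact: End0_br.
    move=> k hk; rewrite curly_m_br //; last exact: E1 _ hk.
    by apply: L1sub; [apply: hX; apply: hY | apply: hY; apply: hX].
Qed.
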